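(* Let $n_1,n_2,n_3$ be integers with $3\le n_1,n_2\le n_3$. If $3\max(n_1,n_2)\le 2n_3\le n_1n_2$, then the direct product graph $K_{n_1+1}\times K_{n_2+1}\times K_{n_3+1}$ has metric dimension $2(n_3+1)-1=2n_3+1$.
   Context: $K_{m_1}\times K_{m_2}\times K_{m_3}$ denotes the direct product of complete graphs: vertices are triples $(x_1,x_2,x_3)$ with $1\le x_i\le m_i$, and two vertices are adjacent iff they differ in every coordinate. A set $W$ of vertices is resolving if for every two distinct vertices $x,y\notin W$ some $w\in W$ has $d(x,w)\ne d(y,w)$ ($d$ = graph distance). The metric dimension is the minimum size of a resolving set. *)

(* Defs.v *)
From mathcomp Require Import all_boot.
Set Implicit Arguments. Unset Strict Implicit. Unset Printing Implicit Defensive.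

Fixpoint ball (T : finType) (e : rel T) (k : nat) (x : T) : {set T} :=
  match k with
  | 0 => [set x]
  | k'.+1 => ball e k' x :|: [set y | [exists z in ball e k' x, e z y]]
  end.

(* Any reachable vertex is
   reachable in at most #|T| steps, so searching k <= #|T| suffices. *)
Definition gdist (T : finType) (e : rel T) (x y : T) : option nat :=
  let ks := [seq k <- iota 0 #|T|.+1 | y \in ball e k x] in
  if ks is k :: _ then Some k else None.

Definition resolving (T : finType) (e : rel T) (W : {set T}) : Prop :=
  forall x y : T, x \notin W -> y \notin W -> x != y ->
    exists2 w, w \in W & gdist e x w != gdist e y w.

Definition metric_dim_eq (T : finType) (e : rel T) (d : nat) : Prop :=
  (exists W : {set T}, resolving e W /\ #|W| = d) /\
  (forall W : {set T}, resolving e W -> d <= #|W|).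

(* Direct (tensor) product of complete graphs K_m1 x K_m2 x K_m3:
   vertices are triples, adjacent iff they differ in every coordinate. *)
Definition KVert (m1 m2 m3 : nat) : finType := ('I_m1 * 'I_m2 * 'I_m3)%type.

Definition Kadj (m1 m2 m3 : nat) : rel (KVert m1 m2 m3) :=
  fun u v => [&& u.1.1 != v.1.1, u.1.2 != v.1.2 & u.2 != v.2].

(* Main.v *)
Require Import Defs.
From mathcomp Require Import all_boot zify.
Set Implicit Arguments. Unset Strict Implicit. Unset Printing Implicit Defensive.


Lemma avoid2 n (a b : 'I_n) : 2 < n -> exists c : 'I_n, (c != a) && (c != b).
Proof.
move=> hn.
have h0 : 0 < n by lia. have h1' : 1 < n by lia.
pose c0 := Ordinal h0. pose c1 := Ordinal h1'. pose c2 := Ordinal hn.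
have Hv : forall c : 'I_n, (c != a) && (c != b) = (val c != val a) && (val c != val b).
  by move=> c.
case: (boolP ((c0 != a) && (c0 != b))) => [H|H0]; first by exists c0.
case: (boolP ((c1 != a) && (c1 != b))) => [H|H1]; first by exists c1.
exists c2; move: H0 H1; rewrite !Hv /=.
case/boolP: (val a == 0) => /eqP Ha0; case/boolP: (val b == 0) => /eqP Hb0;
case/boolP: (val a == 1) => /eqP Ha1; case/boolP: (val b == 1) => /eqP Hb1;
case/boolP: (val a == 2) => /eqP Ha2; case/boolP: (val b == 2) => /eqP Hb2;
rewrite ?Ha0 ?Hb0 ?Ha1 ?Hb1 ?Ha2 ?Hb2 //=; try lia.
Qed.

Section Dist.
Variables m1 m2 m3 : nat.
Hypotheses (h1 : 2 < m1) (h2 : 2 < m2) (h3 : 2 < m3).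
Local Notation T := (KVert m1 m2 m3).
Local Notation e := (@Kadj m1 m2 m3).



Lemma common_nb (x y : T) : exists z, e x z && e z y.
Proof.
case: (avoid2 x.1.1 y.1.1 h1) => a /andP[a1 a2].
case: (avoid2 x.1.2 y.1.2 h2) => b /andP[b1 b2].
case: (avoid2 x.2 y.2 h3) => c /andP[c1 c2].
exists (a, b, c); rewrite /Kadj /=.
by rewrite eq_sym a1 eq_sym b1 eq_sym c1 a2 b2 c2.
Qed.

Lemma Kadj_sym (x y : T) : e x y = e y x.
Proof. by rewrite /Kadj eq_sym [x.1.2 == _]eq_sym [x.2 == _]eq_sym. Qed.

Lemma Kadj_irr (x : T) : e x x = false.
Proof. by rewrite /Kadj eqxx. Qed.

Lemma ball0 (x : T) : ball e 0 x = [set x].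
Proof. by []. Qed.

Lemma in_ball1 (x y : T) : (y \in ball e 1 x) = (y == x) || e x y.
Proof.
rewrite /= !inE; congr (_ || _); apply/existsP/idP => [[z /andP[]]|H].
  by rewrite inE => /eqP ->.
by exists x; rewrite inE eqxx.
Qed.

Lemma in_ball2 (x y : T) : y \in ball e 2 x.
Proof.
rewrite /= !inE; apply/orP; right; apply/existsP.
case: (common_nb x y) => z /andP[H1 H2]; exists z; rewrite H2 andbT.
by rewrite -/(ball e 1 x) in_ball1 H1 orbT.
Qed.

Definition d3 (x y : T) : nat := if x == y then 0 else if e x y then 1 else 2.

Lemma filter_iota_first (P : pred nat) d n :
  d < n -> (forall k, k < d -> ~~ P k) -> P d ->
  exists s, [seq k <- iota 0 n | P k] = d :: s.
Proof.
move=> dn Hlt Pd.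
have -> : n = d + (n - d) by lia.
rewrite iotaD filter_cat add0n.
have -> : [seq k <- iota 0 d | P k] = [::].
  apply/eqP; rewrite -[_ == _]negbK -has_filter; apply/hasPn => k.
  by rewrite mem_iota add0n => /andP[_ /Hlt].
have -> : n - d = (n - d).-1.+1 by lia.
by rewrite /= Pd; eexists.
Qed.

Lemma gdist_d3 (x y : T) : gdist e x y = Some (d3 y x).
Proof.
have cardT : 2 < #|T|.
  rewrite /KVert !card_prod !card_ord.
  have : 3 * 3 <= m1 * m2 by apply: leq_mul.
  move=> H; have : 3 * 3 * 3 <= m1 * m2 * m3 by apply: leq_mul. lia.
rewrite /gdist.
have Hball : forall k, k <= 2 -> (y \in ball e k x) = (d3 y x <= k).
  move=> k hk; rewrite /d3.
  have : (k == 0) || (k == 1) || (k == 2) by lia.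
  case/orP => [/orP[]|] /eqP ->.
  - by rewrite ball0 inE; case: (y == x) => //; case: (e y x).
  - rewrite in_ball1 Kadj_sym; case: (y == x) => //; by case: (e y x).
  - by rewrite in_ball2; case: (y == x) => //; case: (e y x).
have Hd : d3 y x <= 2 by rewrite /d3; case: (y == x) => //; case: (e y x).
have Hlt : forall k, k < d3 y x -> ~~ (y \in ball e k x).
  move=> k Hk; rewrite Hball; lia.
have Hin : y \in ball e (d3 y x) x by rewrite Hball.
have [s ->] := @filter_iota_first (fun k => y \in ball e k x) (d3 y x) (#|T|.+1)
  ltac:(lia) Hlt Hin.
by [].
Qed.

End Dist.


Section Lower.
Variables m1 m2 m3 : nat.
Hypotheses (h1 : 2 < m1) (h2 : 2 < m2) (h3 : 2 < m3).
Local Notation T := (KVert m1 m2 m3).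
Local Notation e := (@Kadj m1 m2 m3).

Lemma resolvingP (W : {set T}) :
  resolving e W <-> (forall x y, x \notin W -> y \notin W -> x != y ->
                      exists2 w, w \in W & e x w != e y w).
Proof.
have key : forall x y w, x \notin W -> y \notin W -> w \in W ->
   (gdist e x w != gdist e y w) = (e x w != e y w).
  move=> x y w xW yW wW.
  rewrite !gdist_d3 // /d3.
  have -> : (w == x) = false by apply/eqP => E; move: xW; rewrite -E wW.
  have -> : (w == y) = false by apply/eqP => E; move: yW; rewrite -E wW.
  rewrite [e w x]Kadj_sym [e w y]Kadj_sym.
  by case: (e x w); case: (e y w).
split=> H x y xW yW xy.
- have [w wW Hw] := H x y xW yW xy; exists w => //; by rewrite -key.
- have [w wW Hw] := H x y xW yW xy; exists w => //; by rewrite key.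
Qed.

Lemma sub2 (V : {set T}) : #|V| <= 2 -> exists v1 v2, V \subset [set v1; v2].
Proof.
have h0 : 0 < m1 by lia. have h0' : 0 < m2 by lia. have h0'' : 0 < m3 by lia.
pose z : T := (Ordinal h0, Ordinal h0', Ordinal h0'').
move=> H.
have : (#|V| == 0) || (#|V| == 1) || (#|V| == 2) by lia.
case/orP => [/orP[]|].
- rewrite cards_eq0 => /eqP ->; exists z, z; exact: sub0set.
- case/cards1P => v ->; exists v, v; apply/subsetP => u; rewrite !inE => ->; by [].
- case/cards2P => v1 [v2 [_ ->]]; by exists v1, v2.
Qed.

Definition cnt (W : {set T}) (c : 'I_m3) := #|[set w in W | w.2 == c]|.

Lemma pair_bound (W : {set T}) c c' : resolving e W -> c != c' -> 3 <= cnt W c + cnt W c'.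
Proof.
move=> /resolvingP HW cc'.
rewrite leqNgt; apply/negP => Hlt.
pose V := [set w in W | (w.2 == c) || (w.2 == c')].
have cV : #|V| <= 2.
  have -> : V = [set w in W | w.2 == c] :|: [set w in W | w.2 == c'].
    by apply/setP => w; rewrite !inE andb_orr.
  by rewrite cardsU; rewrite /cnt in Hlt; lia.
have [v1 [v2 Hsub]] := sub2 cV.
have [a [b [Hcov Hnot]]] : exists a b,
   (forall v, v \in [set v1; v2] -> (v.1.1 == a) || (v.1.2 == b)) /\
   (forall v, v \in [set v1; v2] -> (v.1.1 != a) || (v.1.2 != b)).
  case: (boolP (v1.1.1 == v2.1.1)) => E1.
    have [bb /andP[B1 B2]] := avoid2 v1.1.2 v2.1.2 h2.
    exists v1.1.1, bb; split=> v; rewrite !inE => /orP[] /eqP ->;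
      rewrite ?eqxx ?(eq_sym v2.1.1) ?E1 // ?(eq_sym _ bb) ?B1 ?B2 ?orbT //.
  case: (boolP (v1.1.2 == v2.1.2)) => E2.
    have [aa /andP[A1 A2]] := avoid2 v1.1.1 v2.1.1 h1.
    exists aa, v1.1.2; split=> v; rewrite !inE => /orP[] /eqP ->;
      rewrite ?eqxx ?(eq_sym v2.1.2) ?E2 ?orbT // ?(eq_sym _ aa) ?A1 ?A2 //.
  exists v1.1.1, v2.1.2; split=> v; rewrite !inE => /orP[] /eqP ->;
    rewrite ?eqxx ?orbT //=.
  by rewrite eq_sym E1.
have notW : forall cc, (cc == c) || (cc == c') -> (a, b, cc) \notin W.
  move=> cc Hcc; apply/negP => Hin.
  have : (a, b, cc) \in [set v1; v2] by apply: (subsetP Hsub); rewrite inE Hin Hcc.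
  by move/Hnot; rewrite /= !eqxx.
have [w wW Hw] := HW (a, b, c) (a, b, c') (notW c ltac:(by rewrite eqxx))
   (notW c' ltac:(by rewrite eqxx orbT)) ltac:(by rewrite xpair_eqE negb_and cc' orbT).
move: Hw; rewrite /Kadj /=.
case: (boolP ((w.2 == c) || (w.2 == c'))) => Hwc.
  have : w \in [set v1; v2] by apply: (subsetP Hsub); rewrite inE wW Hwc.
  by move/Hcov => /orP[] /eqP <-; rewrite eqxx /= ?andbF.
move: Hwc; rewrite negb_or => /andP[Hc Hc'].
by rewrite [c == _]eq_sym [c' == _]eq_sym Hc Hc' !andbT eqxx.
Qed.

Lemma lower_bound (W : {set T}) : resolving e W -> (2 * m3).-1 <= #|W|.
Proof.
move=> HW.
have cardW : #|W| = \sum_(c : 'I_m3) cnt W c.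
  rewrite -sum1_card (partition_big (fun w : T => w.2) xpredT) //=.
  apply: eq_bigr => c _; rewrite /cnt -sum1_card; apply: eq_bigl => w.
  by rewrite inE.
rewrite cardW.
case: (boolP [exists c, cnt W c <= 1]) => [/existsP[c0 Hc0]|Hall].
  rewrite (bigD1 c0) //=.
  have Hother : forall c, c != c0 -> 3 - cnt W c0 <= cnt W c.
    move=> c Hc; have := pair_bound HW Hc; lia.
  have : \sum_(c | c != c0) (3 - cnt W c0) <= \sum_(c | c != c0) cnt W c.
    by apply: leq_sum => c Hc; apply: Hother.
  rewrite sum_nat_const cardC1 card_ord.
  move=> H; apply: leq_trans _ (leq_add (leqnn (cnt W c0)) H).
  move: Hc0; case: (cnt W c0) => [|[|]] //= _; lia.
have Hge : forall c, 2 <= cnt W c.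
  move=> c; move/existsPn: Hall => /(_ c); lia.
have : \sum_(c : 'I_m3) 2 <= \sum_(c : 'I_m3) cnt W c by apply: leq_sum => c _; apply: Hge.
rewrite sum_nat_const card_ord; lia.
Qed.

End Lower.


Section Upper.
Variables n1 n2 n3 : nat.
Hypotheses (h1 : 1 < n1) (h2 : 1 < n2) (h3 : 1 < n3).
Variable cor : nat -> bool -> nat * nat.
Definition anti l s := ((cor l s).1, (cor l (~~ s)).2).

Hypothesis Pb : forall l s, l < n3 -> (cor l s).1 < n1 /\ (cor l s).2 < n2.
Hypothesis P1 : forall l, l < n3 ->
  (cor l true).1 <> (cor l false).1 /\ (cor l true).2 <> (cor l false).2.
Hypothesis P2 : forall l l' s s', l < n3 -> l' < n3 -> cor l s = cor l' s' -> l = l'.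
Hypothesis P4 : forall l l' s s', l < n3 -> l' < n3 -> anti l s = anti l' s' -> l = l'.

Definition tri (P : nat -> bool -> Prop) := exists l1 s1 l2 s2 l3 s3,
  [/\ l1 < n3, l2 < n3, l3 < n3, [/\ l1 <> l2, l1 <> l3 & l2 <> l3] &
      [/\ P l1 s1, P l2 s2 & P l3 s3]].

Hypothesis Prow : forall r, r < n1 -> tri (fun l s => (cor l s).1 = r).
Hypothesis Pcol : forall c, c < n2 -> tri (fun l s => (cor l s).2 = c).

Lemma vbound (n : nat) (i : 'I_n) : nat_of_ord i < n.
Proof. exact: ltn_ord. Qed.

Lemma pick (P : nat -> bool -> Prop) (K1 K2 : nat -> bool -> bool) :
  tri P ->
  (forall l s l' s', l < n3 -> l' < n3 -> P l s -> P l' s' -> K1 l s -> K1 l' s' -> l = l') ->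
  (forall l s l' s', l < n3 -> l' < n3 -> P l s -> P l' s' -> K2 l s -> K2 l' s' -> l = l') ->
  exists l s, [/\ l < n3, P l s, ~~ K1 l s & ~~ K2 l s].
Proof.
move=> [l1 [s1 [l2 [s2 [l3 [s3 [L1 L2 L3 [D12 D13 D23] [Q1 Q2 Q3]]]]]]]] HK1 HK2.
have U1 := HK1 _ _ _ _ L1 L2 Q1 Q2; have U2 := HK1 _ _ _ _ L1 L3 Q1 Q3;
have U3 := HK1 _ _ _ _ L2 L3 Q2 Q3.
have V1 := HK2 _ _ _ _ L1 L2 Q1 Q2; have V2 := HK2 _ _ _ _ L1 L3 Q1 Q3;
have V3 := HK2 _ _ _ _ L2 L3 Q2 Q3.
move: U1 U2 U3 V1 V2 V3.
case E1: (K1 l1 s1); case F1: (K2 l1 s1); case E2: (K1 l2 s2); case F2: (K2 l2 s2);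
case E3: (K1 l3 s3); case F3: (K2 l3 s3) => U1 U2 U3 V1 V2 V3;
first [ by exists l1, s1; rewrite E1 F1 | by exists l2, s2; rewrite E2 F2
      | by exists l3, s3; rewrite E3 F3
      | exfalso; first [ exact: D12 (U1 isT isT) | exact: D13 (U2 isT isT)
                       | exact: D23 (U3 isT isT) | exact: D12 (V1 isT isT)
                       | exact: D13 (V2 isT isT) | exact: D23 (V3 isT isT) ] ].
Qed.

Local Notation T := (KVert n1.+1 n2.+1 n3.+1).
Local Notation e := (@Kadj n1.+1 n2.+1 n3.+1).
Definition c1 (x : T) : nat := nat_of_ord x.1.1.
Definition c2 (x : T) : nat := nat_of_ord x.1.2.
Definition c3 (x : T) : nat := nat_of_ord x.2.
Arguments c1 : simpl never.
Arguments c2 : simpl never.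
Arguments c3 : simpl never.
Lemma c1b x : c1 x <= n1. Proof. by have := ltn_ord x.1.1. Qed.
Lemma c2b x : c2 x <= n2. Proof. by have := ltn_ord x.1.2. Qed.
Lemma c3b x : c3 x <= n3. Proof. by have := ltn_ord x.2. Qed.
Lemma c_inj x y : c1 x = c1 y -> c2 x = c2 y -> c3 x = c3 y -> x = y.
Proof.
by case: x y => [[? ?] ?] [[? ?] ?]; rewrite /c1 /c2 /c3 /= => /val_inj -> /val_inj -> /val_inj ->.
Qed.


Definition vtx (l : nat) (s : bool) : T :=
  (inord (cor l s).1.+1, inord (cor l s).2.+1, inord l.+1).
Definition o : T := (ord0, ord0, ord0).
Definition Wc : {set T} :=
  o |: [set vtx (nat_of_ord p.1) p.2 | p in [set: 'I_n3 * bool]].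

Lemma vtx1 l s : l < n3 -> c1 (vtx l s) = (cor l s).1.+1.
Proof. by move=> Hl; rewrite /c1 /c2 /= inordK //; have [] := Pb s Hl. Qed.
Lemma vtx2 l s : l < n3 -> c2 (vtx l s) = (cor l s).2.+1.
Proof. by move=> Hl; rewrite /c1 /c2 /= inordK //; have [] := Pb s Hl. Qed.
Lemma vtx3 l s : l < n3 -> c3 (vtx l s) = l.+1.
Proof. by move=> Hl; rewrite /c3 /= inordK. Qed.

Lemma vtx_in l s : l < n3 -> vtx l s \in Wc.
Proof.
move=> Hl; rewrite /Wc inE; apply/orP; right.
by apply/imsetP; exists (Ordinal Hl, s).
Qed.

Lemma c1o : c1 o = 0. Proof. by []. Qed.
Lemma c2o : c2 o = 0. Proof. by []. Qed.
Lemma c3o : c3 o = 0. Proof. by []. Qed.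

Lemma o_in : o \in Wc.
Proof. by rewrite /Wc setU11. Qed.

Lemma adjE (x w : T) : e x w =
  [&& c1 x != c1 w, c2 x != c2 w & c3 x != c3 w].
Proof. by []. Qed.

Lemma row_dist (u v : T) : 0 < c1 u -> c1 u != c1 v ->
  exists2 w, w \in Wc & e u w != e v w.
Proof.
move=> Hu Huv.
have Hr : (c1 u).-1 < n1 by have := c1b u; lia.
have [l [s [Hl Pls K1 K2]]] := pick (K1 := fun l s => l.+1 == c3 v)
   (K2 := fun l s => (cor l s).2.+1 == c2 v) (Prow Hr)
   ltac:(by move=> l s l' s' _ _ _ _ /eqP <- /eqP [])
   ltac:(by move=> l s l' s' Hl Hl' E E' /eqP F /eqP F'; apply: (P2 (s := s) (s' := s')) => //;
          move: E E' F F'; case: (cor l s) => a1 b1; case: (cor l' s') => a2 b2 /= E E' F F';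
          congr pair; lia).
exists (vtx l s); first exact: vtx_in.
rewrite !adjE vtx1 // vtx2 // vtx3 // Pls.
have -> : c1 u != (c1 u).-1.+1 = false by apply/negbF; lia.
rewrite /=; apply/negP => /negP; apply; apply/and3P; split.
- apply/eqP => E; move/eqP: Huv; apply; lia.
- by rewrite eq_sym.
- by rewrite eq_sym.
Qed.

Lemma col_dist (u v : T) : 0 < c2 u -> c2 u != c2 v ->
  exists2 w, w \in Wc & e u w != e v w.
Proof.
move=> Hu Huv.
have Hr : (c2 u).-1 < n2 by have := c2b u; lia.
have [l [s [Hl Pls K1 K2]]] := pick (K1 := fun l s => l.+1 == c3 v)
   (K2 := fun l s => (cor l s).1.+1 == c1 v) (Pcol Hr)
   ltac:(by move=> l s l' s' _ _ _ _ /eqP <- /eqP [])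
   ltac:(by move=> l s l' s' Hl Hl' E E' /eqP F /eqP F'; apply: (P2 (s := s) (s' := s')) => //;
          move: E E' F F'; case: (cor l s) => a1 b1; case: (cor l' s') => a2 b2 /= E E' F F';
          congr pair; lia).
exists (vtx l s); first exact: vtx_in.
rewrite !adjE vtx1 // vtx2 // vtx3 // Pls.
have -> : c2 u != (c2 u).-1.+1 = false by apply/negbF; lia.
rewrite andbF /=; apply/negP => /negP; apply; apply/and3P; split.
- by rewrite eq_sym.
- by move: Huv; lia.
- by rewrite eq_sym.
Qed.

Lemma layer_or_anti l a b : l < n3 ->
  (exists s, (a != (cor l s).1.+1) && (b != (cor l s).2.+1)) \/
  (exists s, a = (cor l s).1.+1 /\ b = (cor l (~~ s)).2.+1).
Proof.
move=> Hl; have [R C] := P1 Hl.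
case: (boolP ((a != (cor l true).1.+1) && (b != (cor l true).2.+1))) => [H|H];
  first by left; exists true.
case: (boolP ((a != (cor l false).1.+1) && (b != (cor l false).2.+1))) => [H'|H'];
  first by left; exists false.
right; move: H H'; rewrite !negb_and !negbK.
case/orP => /eqP Ha; case/orP => /eqP Hb.
- exfalso; apply: R; lia.
- by exists true.
- by exists false.
- exfalso; apply: C; lia.
Qed.

Lemma layer_dist (x y : T) l : l < n3 -> c3 x = l.+1 -> c3 y != l.+1 ->
  (forall s, ~ (c1 y = (cor l s).1.+1 /\ c2 y = (cor l (~~ s)).2.+1)) ->
  exists2 w, w \in Wc & e x w != e y w.
Proof.
move=> Hl Hx Hy Hna.
case: (layer_or_anti (c1 y) (c2 y) Hl) => [[s Hs]|[s Hs]]; last by case: (Hna s).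
exists (vtx l s); first exact: vtx_in.
rewrite !adjE vtx1 // vtx2 // vtx3 // Hx eqxx !andbF /=.
by case/andP: Hs => -> ->; rewrite Hy.
Qed.

Lemma Wc_resolving : resolving e Wc.
Proof.
apply/resolvingP; try lia.
move=> x y _ _ xy.
case: (boolP (c1 x == c1 y)) => Ha.
  case: (boolP (c2 x == c2 y)) => Hb.
    have Hc : c3 x != c3 y.
      apply: contra xy => Hc; apply/eqP.
      by apply: c_inj; apply/eqP.
    have anti_pos : forall (z : T) l, l < n3 -> c1 z = 0 \/ c2 z = 0 ->
       forall s, ~ (c1 z = (cor l s).1.+1 /\ c2 z = (cor l (~~ s)).2.+1).
      by move=> z l _ [] -> s [].
    have Lx : c3 x <= n3 by have := c3b x; lia.
    have Ly : c3 y <= n3 by have := c3b y; lia.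
    case: (posnP (c3 x)) => Hx0.
      have Hy0 : 0 < c3 y by move: Hc; rewrite Hx0; lia.
      case: (boolP ((0 < c1 x) && (0 < c2 x))) => Hpos.
        exists o; first exact: o_in.
        rewrite !adjE c1o c2o c3o; move: Hpos Ha Hb Hx0 Hy0; lia.
      have [w Hw Hw'] : exists2 w, w \in Wc & e y w != e x w.
        apply: (@layer_dist y x (c3 y).-1); try lia.
      by exists w; rewrite // eq_sym.
    case: (posnP (c3 y)) => Hy0.
      case: (boolP ((0 < c1 x) && (0 < c2 x))) => Hpos.
        exists o; first exact: o_in.
        rewrite !adjE c1o c2o c3o; move: Hpos Ha Hb Hx0 Hy0; lia.
      apply: (@layer_dist x y (c3 x).-1); try lia.
    case: (boolP [forall s : bool, ~~ ((c1 y == (cor (c3 x).-1 s).1.+1) &&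
                          (c2 y == (cor (c3 x).-1 (~~ s)).2.+1))]) => HA.
      apply: (@layer_dist x y (c3 x).-1); try lia.
      move=> s [E1 E2]; move/forallP: HA => /(_ s); by rewrite E1 E2 !eqxx.
    have [w Hw Hw'] : exists2 w, w \in Wc & e y w != e x w.
      apply: (@layer_dist y x (c3 y).-1); try lia.
      move=> s' [E1 E2].
      move/forallPn: HA => [s]; rewrite negbK => /andP[/eqP F1 /eqP F2].
      have : (c3 x).-1 = (c3 y).-1.
        apply: (P4 (s := s) (s' := s')); try lia.
        rewrite /anti; congr pair; lia.
      move: Hc; lia.
    by exists w; rewrite // eq_sym.
  case: (posnP (c2 x)) => H0.
    have [w Hw Hw'] : exists2 w, w \in Wc & e y w != e x w.
      apply: col_dist; move: Hb; rewrite ?H0; lia.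
    by exists w; rewrite // eq_sym.
  by apply: col_dist.
case: (posnP (c1 x)) => H0.
  have [w Hw Hw'] : exists2 w, w \in Wc & e y w != e x w.
    apply: row_dist; move: Ha; rewrite ?H0; lia.
  by exists w; rewrite // eq_sym.
by apply: row_dist.
Qed.

Lemma Wc_card : #|Wc| = 2 * n3 + 1.
Proof.
rewrite /Wc cardsU1.
have -> : o \notin [set vtx (nat_of_ord p.1) p.2 | p in [set: 'I_n3 * bool]].
  apply/imsetP => [[p _ E]].
  have := congr1 (fun z : T => c3 z) E; rewrite vtx3 //=.
rewrite card_imset; first by rewrite cardsT card_prod card_ord card_bool; lia.
move=> [l s] [l' s'] /= E.
have El : nat_of_ord l = nat_of_ord l'.
  have := congr1 (fun z : T => c3 z) E; rewrite !vtx3 //; lia.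
have Ell : l = l' by apply: val_inj.
subst l'; congr pair.
have := congr1 (fun z : T => c1 z) E; rewrite !vtx1 // => Er.
have [R _] := P1 (ltn_ord l).
clear E; move: Er; case: s; case: s' => //= Er; exfalso; apply: R; lia.
Qed.

End Upper.


Section Constr.
Variables n1 m n3 : nat.
Hypotheses (H1 : 3 <= n1) (H2 : 3 <= m) (H3 : 3 * maxn n1 m <= 2 * n3)
           (H4 : 2 * n3 <= n1 * m).

Definition p := n1./2.
Definition s0 := if odd n1 then maxn 2 (n3 - p * m) else 0.
Definition N := n3 - s0.
Definition sig := N - m.
Definition h := uphalf m.
Definition M := n1.-1.

Lemma facts :
  [/\ [/\ 0 < p, 3 * p <= N, N <= p * m, m <= N & n3 = N + s0],
      [/\ 0 < h, h < m, s0 + h <= m, m + h <= n3 & s0 <= m] &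
      [/\ 0 < s0 -> odd n1, odd n1 -> 2 <= s0, odd n1 -> M = 2 * p,
          ~~ odd n1 -> n1 = 2 * p & sig + s0 <= N]].
Proof.
have Hn1 : n1 = odd n1 + 2 * p by rewrite /p; lia.
have Hm : m = odd m + 2 * m./2 by lia.
have Hh : h = odd m + m./2 by rewrite /h uphalf_half.
have Hmax1 : 3 * n1 <= 2 * n3 by lia.
have Hmax2 : 3 * m <= 2 * n3 by lia.
have Hq : n1 * m = odd n1 * m + 2 * (p * m).
  by rewrite {1}Hn1 mulnDl mulnA.
have Hp0 : 0 < p by rewrite /p; lia.
have Hq3 : 3 * p <= p * m by rewrite mulnC leq_mul2l H2 orbT.
have Hqm : m <= p * m by rewrite leq_pmull.
rewrite /sig /N /s0 /M.
case: (boolP (odd n1)) => Ho.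
- rewrite Ho /= in Hq *; rewrite mul1n in Hq.
  have Hmm : 4 <= m.
    case: (ltnP m 4) => // Hm3.
    have Em : m = 3 by lia.
    move: Hq H4 Hmax1; rewrite Em => A B C. have Hn : n1 = 1 + 2 * p by move: Hn1; rewrite Ho. move: A B C Hn. clear. lia.
  split; split; lia.
- rewrite (negbTE Ho) /= in Hq *; rewrite mul0n add0n in Hq.
  split; split; lia.
Qed.

Definition tt k := k * p %/ N.
Definition D k := (sig <= k) && (k < sig + s0).
Definition kap l := if l < N then l else sig + (l - N).
Definition rowU l := if l < N then 2 * tt l else M.
Definition rowL l := if l < N then (if D l then M else (2 * tt l).+1)
                     else (2 * tt (kap l)).+1.
Definition cor l (b : bool) : nat * nat :=
  if b then (rowU l, kap l %% m) else (rowL l, (kap l + h) %% m).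

Lemma tt_lt k : k < N -> tt k < p.
Proof.
have [[Hp0 _ _ HmN _] _ _] := facts.
move=> Hk; rewrite /tt ltn_divLR; last lia.
by rewrite mulnC ltn_pmul2l.
Qed.

Lemma chunk k k' : k < N -> k' < N -> tt k = tt k' -> k %% m = k' %% m -> k = k'.
Proof.
have [[Hp0 _ HNq HmN _] _ _] := facts.
wlog Hkk : k k' / k <= k'.
  move=> W Hk Hk' E E'; case: (leqP k k') => H; first exact: W.
  by symmetry; apply: W => //; lia.
move=> Hk Hk' E E'.
have Hd : k' < k + m.
  rewrite ltnNge; apply/negP => Hge.
  have : tt k < tt k'.
    have E1 : k * p %/ N * N <= k * p := leq_trunc_div _ _.
    have E2 : (k + m) * p <= k' * p by rewrite leq_mul2r Hge orbT.
    rewrite mulnDl in E2.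
    have E3 : N <= m * p by rewrite mulnC.
    rewrite /tt -[_ < _]/(_.+1 <= _) leq_divRL; last lia.
    rewrite mulSn; lia.
  by rewrite E ltnn.
have Hd' : k' = k + (k' - k) by lia.
move: E'; rewrite Hd' -{1}[k]addn0 => /eqP; rewrite eqn_modDl mod0n modn_small; last lia.
by move=> /eqP H; lia.
Qed.

Lemma h2 : m <= 2 * h.
Proof. rewrite /h uphalf_half; lia. Qed.

Lemma range_inj a a' : sig <= a < sig + s0 -> sig <= a' < sig + s0 ->
  a %% m = a' %% m -> a = a'.
Proof.
have [[_ _ _ HmN _] [_ _ _ _ Hsm] _] := facts.
move=> Ha Ha' E.
have Ea : a = sig + (a - sig) by lia.
have Ea' : a' = sig + (a' - sig) by lia.
move: E; rewrite Ea Ea' => /eqP; rewrite eqn_modDl !modn_small; try lia; try (move=> /eqP; lia).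
Qed.

Lemma Zl a a' : sig <= a < sig + s0 -> sig <= a' < sig + s0 ->
  (a + h) %% m <> a' %% m.
Proof.
have [[_ _ _ HmN _] [Hh0 Hhm Hsh _ Hsm] _] := facts.
have := h2 => H2h.
move=> Ha Ha' E.
have Ea : a + h = sig + (a - sig + h) by lia.
have Ea' : a' = sig + (a' - sig) by lia.
move: E; rewrite Ea Ea' => /eqP; rewrite eqn_modDl !modn_small; try lia; try (move=> /eqP; lia).
Qed.

Lemma kapN l : l < n3 -> kap l < N.
Proof.
have [[_ _ _ HmN Hn3] _ [_ _ _ _ Hss]] := facts.
rewrite /kap; case: ifP => //; lia.
Qed.

Lemma rowU_cases l : l < n3 ->
  (l < N /\ [/\ rowU l = 2 * tt l, kap l = l & tt l < p]) \/
  (N <= l /\ [/\ rowU l = 2 * p, D (kap l) & odd n1]).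
Proof.
have [[_ _ _ HmN Hn3] _ [Hso _ HM _ Hss]] := facts.
move=> Hl; rewrite /rowU /kap /D; case: ifP => HlN.
  by left; split => //; split => //; apply: tt_lt.
right; have Ho : odd n1 by apply: Hso; lia.
split; first lia. split => //; first by rewrite HM.
apply/andP; split; lia.
Qed.

Lemma rowL_cases l : l < n3 ->
  [\/ l < N /\ [/\ ~~ D l, rowL l = (2 * tt l).+1, kap l = l & tt l < p],
      l < N /\ [/\ D l, rowL l = 2 * p, kap l = l & odd n1] |
      N <= l /\ [/\ D (kap l), rowL l = (2 * tt (kap l)).+1 & tt (kap l) < p]].
Proof.
have [[_ _ _ HmN Hn3] _ [Hso _ HM _ Hss]] := facts.
move=> Hl; have HkN := kapN Hl.
rewrite /rowL; case: ifP => HlN.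
  have Ek : kap l = l by rewrite /kap HlN.
  case: ifP => HD.
    have Ho : odd n1 by apply: Hso; move: HD; rewrite /D; lia.
    constructor 2; split => //; split => //; by rewrite HM.
  constructor 1; split => //; split => //.
  exact: tt_lt.
constructor 3; split; first lia.
split; last exact: tt_lt.
  by rewrite /D /kap HlN; apply/andP; split; lia.
by [].
Qed.

Lemma kap_ge l l' : N <= l -> N <= l' -> kap l = kap l' -> l = l'.
Proof.
rewrite /kap => H H'; rewrite !ifN; try lia.
Qed.

Lemma inj_side l l' (b : bool) : l < n3 -> l' < n3 ->
  (if b then rowU l else rowL l) = (if b then rowU l' else rowL l') ->
  kap l %% m = kap l' %% m -> l = l'.
Proof.
move=> Hl Hl'; have HkN := kapN Hl; have HkN' := kapN Hl'.
case: b => /=.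
  case: (rowU_cases Hl) => [[HN [E1 E2 E3]]|[HN [E1 E2 E3]]];
  case: (rowU_cases Hl') => [[HN' [E1' E2' E3']]|[HN' [E1' E2' E3']]];
  rewrite E1 E1' => Er; rewrite ?E2 ?E2' => Em.
  - apply: chunk => //; lia.
  - lia.
  - lia.
  - by apply: kap_ge => //; apply: range_inj => //; move: E2 E2'; rewrite /D.
case: (rowL_cases Hl) => [[HN [E1 E2 E3 E4]]|[HN [E1 E2 E3 E4]]|[HN [E1 E2 E3]]];
case: (rowL_cases Hl') => [[HN' [E1' E2' E3' E4']]|[HN' [E1' E2' E3' E4']]|[HN' [E1' E2' E3']]];
rewrite E2 E2' => Er; rewrite ?E3 ?E3' => Em; try lia.
- apply: chunk => //; lia.
- have Ek : l = kap l' by apply: chunk => //; lia.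
  by move: E1; rewrite Ek E1'.
- by apply: range_inj => //; move: E1 E1'; rewrite /D.
- have Ek : kap l = l' by apply: chunk => //; lia.
  by move: E1'; rewrite -Ek E1.
- by apply: kap_ge => //; apply: chunk => //; lia.
Qed.

Lemma cross l l' : l < n3 -> l' < n3 -> rowU l = rowL l' ->
  (sig <= kap l < sig + s0) /\ (sig <= kap l' < sig + s0).
Proof.
move=> Hl Hl'.
case: (rowU_cases Hl) => [[HN [E1 E2 E3]]|[HN [E1 E2 E3]]];
case: (rowL_cases Hl') => [[HN' [E1' E2' E3' E4']]|[HN' [E1' E2' E3' E4']]|[HN' [E1' E2' E3']]];
rewrite E1 E2' => Er; try lia.
by move: E2 E1'; rewrite /D E3' => -> ->.
Qed.

Lemma cor_bound l b : l < n3 -> (cor l b).1 < n1 /\ (cor l b).2 < m.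
Proof.
have Hn1 : n1 = odd n1 + 2 * p by rewrite /p; lia.
move=> Hl; rewrite /cor; case: b => /=; (split; last by rewrite ltn_mod; lia).
  case: (rowU_cases Hl) => [[HN [E1 E2 E3]]|[HN [E1 E2 E3]]]; rewrite E1; lia.
case: (rowL_cases Hl) => [[HN [E1 E2 E3 E4]]|[HN [E1 E2 E3 E4]]|[HN [E1 E2 E3]]]; rewrite E2; lia.
Qed.

Definition row (b : bool) l := if b then rowU l else rowL l.

Lemma cor_eq l b : cor l b = (row b l, (kap l + (if b then 0 else h)) %% m).
Proof. by rewrite /cor /row; case: b; rewrite ?addn0. Qed.

Lemma modh x : (x + h) %% m <> x %% m.
Proof.
have [_ [Hh0 Hhm _ _ _] _] := facts.
move=> /eqP; rewrite -{2}[x]addn0 eqn_modDl mod0n modn_small //; lia.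
Qed.

Lemma gen l l' b b' (o o' : nat) : l < n3 -> l' < n3 -> row b l = row b' l' ->
  (o = 0 \/ o = h) -> (o' = 0 \/ o' = h) -> (b = b' <-> o = o') ->
  (kap l + o) %% m = (kap l' + o') %% m -> l = l'.
Proof.
have [_ [Hh0 Hhm _ _ _] _] := facts.
move=> Hl Hl' Er Ho Ho' Hbo Ec.
case: (boolP (b == b')) => /eqP Ebb.
  have Eoo : o = o' by apply/Hbo.
  subst b' o'; apply: (inj_side (b := b)) => //.
  by apply/eqP; move/eqP: Ec; rewrite eqn_modDr.
have Eoo : o <> o' by move=> E; apply: Ebb; apply/Hbo.
have Hz : forall a a', sig <= a < sig + s0 -> sig <= a' < sig + s0 ->
    (a + o) %% m <> (a' + o') %% m.
  move=> a a' Ha Ha'.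
  case: Ho Ho' Eoo => -> [] -> // _.
    by rewrite addn0 => E; apply: (@Zl a' a) => //; rewrite E.
  by rewrite addn0; apply: Zl.
case: b b' Ebb Er {Hbo} => [] [] // _ /= Er.
- by have [R R'] := cross Hl Hl' Er; case: (Hz _ _ R R' Ec).
- by have [R' R] := cross Hl' Hl (esym Er); case: (Hz _ _ R R' Ec).
Qed.

Lemma P1c l : l < n3 ->
  (cor l true).1 <> (cor l false).1 /\ (cor l true).2 <> (cor l false).2.
Proof.
move=> Hl; rewrite !cor_eq /= addn0; split; last by move=> E; apply: (@modh (kap l)).
rewrite /row.
case: (rowU_cases Hl) => [[HN [E1 E2 E3]]|[HN [E1 E2 E3]]];
case: (rowL_cases Hl) => [[HN' [E1' E2' E3' E4']]|[HN' [E1' E2' E3' E4']]|[HN' [E1' E2' E3']]];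
rewrite E1 E2'; lia.
Qed.

Lemma P2c l l' b b' : l < n3 -> l' < n3 -> cor l b = cor l' b' -> l = l'.
Proof.
have [_ [Hh0 Hhm _ _ _] _] := facts.
move=> Hl Hl'; rewrite !cor_eq; case=> Er Ec.
apply: (gen (b := b) (b' := b') (o := if b then 0 else h) (o' := if b' then 0 else h)) => //;
  try by case: (b); [left|right].
  by case: (b'); [left|right].
by case: (b); case: (b'); split => //; lia.
Qed.

Lemma P4c l l' b b' : l < n3 -> l' < n3 -> anti cor l b = anti cor l' b' -> l = l'.
Proof.
have [_ [Hh0 Hhm _ _ _] _] := facts.
move=> Hl Hl'; rewrite /anti !cor_eq /=; case=> Er Ec.
apply: (gen (b := b) (b' := b') (o := if ~~ b then 0 else h) (o' := if ~~ b' then 0 else h)) => //;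
  try by case: (b); [right|left].
  by case: (b'); [right|left].
by case: (b); case: (b') => /=; split => //; lia.
Qed.

Lemma ttE k t : t * N <= k * p -> k * p < t.+1 * N -> tt k = t.
Proof.
have [[Hp0 H3p _ _ _] _ _] := facts.
move=> A B; apply/eqP; rewrite eqn_leq; apply/andP; split.
  by rewrite -ltnS /tt ltn_divLR //; lia.
by rewrite /tt leq_divRL //; lia.
Qed.

Lemma chunk_wit t : t < p -> exists k0, k0 + 2 < N /\ (forall j, j <= 2 -> tt (k0 + j) = t).
Proof.
have [[Hp0 H3p HNq _ _] _ _] := facts.
move=> Ht.
pose X := t * N + p.-1.
pose k0 := X %/ p.
have EX : X = k0 * p + X %% p := divn_eq X p.
have RX : X %% p < p := ltn_pmod X Hp0.
have Hlo : t * N <= k0 * p by rewrite /X in EX; lia.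
have Hhi : k0 * p + 2 * p < t.+1 * N by rewrite mulSn; rewrite /X in EX; lia.
have Htp : t.+1 * N <= p * N by rewrite leq_mul2r Ht orbT.
exists k0; split.
  have : (k0 + 2) * p < N * p by rewrite mulnDl mulnC [N * p]mulnC; lia.
  by rewrite ltn_pmul2r.
move=> j Hj; apply: ttE; rewrite mulnDl.
  lia.
have : j * p <= 2 * p by rewrite leq_mul2r Hj orbT.
lia.
Qed.

Lemma Prowc r : r < n1 -> tri n3 (fun l b => (cor l b).1 = r).
Proof.
have [[Hp0 H3p HNq HmN Hn3] [Hh0 Hhm Hsh Hmh Hsm] [Hso Hs2 HM Hev Hss]] := facts.
have Hn1 : n1 = odd n1 + 2 * p by rewrite /p; lia.
move=> Hr.
case: (ltnP r (2 * p)) => Hr2.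
  have Ht : r./2 < p by lia.
  have [k0 [Hk0 Htt]] := chunk_wit Ht.
  have Hk : forall j, j <= 2 -> k0 + j < N by lia.
  case: (boolP (odd r)) => Hor.
    pose w k := if D k then N + (k - sig) else k.
    have Hw : forall j, j <= 2 -> w (k0 + j) < n3 /\ (cor (w (k0 + j)) false).1 = r
                                     /\ kap (w (k0 + j)) = k0 + j.
      move=> j Hj; rewrite /w /cor /=.
      case: ifP => HD.
        have HDv := HD; rewrite /D in HDv.
        have Hkap : kap (N + (k0 + j - sig)) = k0 + j by rewrite /kap ifN; lia.
        split; first lia. split => //.
        rewrite /rowL ifN; last lia. rewrite Hkap Htt //; lia.
      have HkN := Hk j Hj.
      split; first lia. split; last by rewrite /kap HkN.
      by rewrite /rowL HkN HD Htt //; lia.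
    have [A1 [B1 C1]] := Hw 0 isT; have [A2 [B2 C2]] := Hw 1 isT; have [A3 [B3 C3]] := Hw 2 isT.
    exists (w (k0 + 0)), false, (w (k0 + 1)), false, (w (k0 + 2)), false; split => //;
      split => E; [move: C1 C2 | move: C1 C3 | move: C2 C3]; rewrite E; lia.
  have Hu : forall j, j <= 2 -> (cor (k0 + j) true).1 = r.
    move=> j Hj; rewrite /cor /= /rowU (Hk _ Hj) Htt //; lia.
  exists (k0 + 0), true, (k0 + 1), true, (k0 + 2), true.
  split; [lia|lia|lia|split; lia|by split; apply: Hu].
have Ho : odd n1 by case: (boolP (odd n1)) => // Ho; have := Hev Ho; lia.
have Hs := Hs2 Ho.
have HrM : r = 2 * p by lia.
have HD0 : D sig by rewrite /D; apply/andP; split; lia.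
have HD1 : D sig.+1 by rewrite /D; apply/andP; split; lia.
have HsN : sig.+1 < N by lia.
have Ha : (cor sig false).1 = r.
  rewrite /cor /= /rowL.
  have -> : (sig < N) = true by lia.
  by rewrite HD0 HM.
have Hb : (cor sig.+1 false).1 = r.
  rewrite /cor /= /rowL.
  have -> : (sig.+1 < N) = true by lia.
  by rewrite HD1 HM.
have Hc : (cor N true).1 = r.
  rewrite /cor /= /rowU.
  have -> : (N < N) = false by lia.
  by rewrite HM.
exists sig, false, sig.+1, false, N, true.
split; [lia|lia|lia|split; lia|by split].
Qed.

Lemma Pcolc c : c < m -> tri n3 (fun l b => (cor l b).2 = c).
Proof.
have [[Hp0 H3p HNq HmN Hn3] [Hh0 Hhm Hsh Hmh Hsm] [Hso Hs2 HM Hev Hss]] := facts.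
have H2h := h2.
have Hsig : sig = N - m by [].
move=> Hc.
have kapS : forall l, l < N -> kap l = l by move=> l Hl; rewrite /kap Hl.
have kapE : forall u, u < s0 -> kap (N + u) = sig + u by move=> u Hu; rewrite /kap ifN; lia.
have Mm : forall x, (x + m) %% m = x %% m by move=> x; rewrite modnDr.
case: (ltnP c h) => Hch.
  have Hw2 : (cor (c + m - h) false).2 = c.
    rewrite /cor kapS; last lia.
    have -> : c + m - h + h = c + m by lia.
    by rewrite Mm modn_small //.
  have Hw1 : (cor c true).2 = c by rewrite /cor kapS ?modn_small //; lia.
  case: (ltnP (c + m) N) => HcN.
    exists c, true, (c + m - h), false, (c + m), true.
    split; [lia|lia|lia|split; lia|split => //]; by rewrite /cor kapS // Mm modn_small.
  exists c, true, (c + m - h), false, (N + (c - sig)), true.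
  split; [lia|lia|lia|split; lia|split => //]; rewrite /cor kapE; last lia.
  have -> : sig + (c - sig) = c by lia.
  by rewrite modn_small.
have Hw2 : (cor (c - h) false).2 = c.
  rewrite /cor kapS; last lia.
  by rewrite subnK // modn_small.
have Hw1 : (cor c true).2 = c by rewrite /cor kapS ?modn_small //; lia.
case: (ltnP (c - h + m) N) => HcN.
  exists c, true, (c - h), false, (c - h + m), false.
  split; [lia|lia|lia|split; lia|split => //]; rewrite /cor kapS //.
  by rewrite -addnA [m + h]addnC addnA subnK // Mm modn_small.
exists c, true, (c - h), false, (N + (c - h - sig)), false.
split; [lia|lia|lia|split; lia|split => //]; rewrite /cor kapE; last lia.
have -> : sig + (c - h - sig) + h = c by lia.
by rewrite modn_small.
Qed.

End Constr.


Theorem mainTheorem10 (n1 n2 n3 : nat) :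
  3 <= n1 -> 3 <= n2 -> n1 <= n3 -> n2 <= n3 ->
  3 * maxn n1 n2 <= 2 * n3 -> 2 * n3 <= n1 * n2 ->
  metric_dim_eq (@Kadj n1.+1 n2.+1 n3.+1) (2 * n3 + 1).
Proof.
move=> H1 H2 H13 H23 H3 H4; split.
- exists (Wc n1 n2 n3 (cor n1 n2 n3)); split.
  + apply: Wc_resolving; try lia.
    * by move=> l s Hl; apply: cor_bound.
    * by move=> l Hl; apply: P1c.
    * by move=> l l' s s' Hl Hl'; apply: P2c.
    * by move=> l l' s s' Hl Hl'; apply: P4c.
    * by move=> r Hr; apply: Prowc.
    * by move=> c Hc; apply: Pcolc.
  + apply: Wc_card; try lia.
    * by move=> l s Hl; apply: cor_bound.
    * by move=> l Hl; apply: P1c.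
- move=> W HW; have := lower_bound _ _ _ HW; lia.
Qed.
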